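(* Let $p$ be a prime, $m\mid n$, $s=p^m-1$, $t=(p^n-1)/(p^m-1)$, and assume $\gcd(s,t)=1$. Let $\alpha$ be a generator of $\mathbb{F}_{p^n}^\times$, $\beta=\alpha^t\in\mathbb{F}_{p^m}^\times$, $\gamma=\alpha^s$, and let $B_{i,j}=\mathrm{tr}_{\mathbb{F}_{p^n}/\mathbb{F}_p}(\beta^i\gamma^j)$ for $(i,j)\in\mathbb{Z}_s\times\mathbb{Z}_t$. For each $j$, consider the column $(B_{i,j})_{0\le i<s}$. Then: (1) if $\mathrm{tr}_{\mathbb{F}_{p^n}/\mathbb{F}_{p^m}}(\gamma^j)=0$, the column is identically zero; (2) if $\mathrm{tr}_{\mathbb{F}_{p^n}/\mathbb{F}_{p^m}}(\gamma^j)=\beta^r\in\mathbb{F}_{p^m}^\times$, then the column equals $\mathsf{DB}_\beta^{[r]}$, i.e. $B_{i,j}=\mathrm{tr}_{\mathbb{F}_{p^m}/\mathbb{F}_p}(\beta^{r+i})$ for all $0\le i<s$.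
   Context: $\mathrm{tr}_{K/F}$ denotes the field trace. $\mathsf{DB}_\beta=(\mathrm{tr}_{\mathbb{F}_{p^m}/\mathbb{F}_p}(\beta^i))_{0\le i<s}$ and for an integer $r$, $\mathsf{DB}_\beta^{[r]}$ is its cyclic shift $(\mathrm{tr}_{\mathbb{F}_{p^m}/\mathbb{F}_p}(\beta^{r+i}))_{0\le i<s}$, indices mod $s$. *)

(* Defs.v *)
From mathcomp Require Import all_boot all_order all_algebra all_field.
Set Implicit Arguments. Unset Strict Implicit. Unset Printing Implicit Defensive.
Import GRing.Theory.
Local Open Scope ring_scope.

(* Field traces in a finite field L of characteristic p, written as sums of
   Frobenius powers (the standard formula for traces of finite fields).
   [ftrace p e d x] = \sum_(k < d) x^(p^(e*k)) is the trace from F_{p^(e*d)}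
   down to F_{p^e}, applied to an element x of F_{p^(e*d)} (seen inside L). *)
Definition ftrace (L : finFieldType) (p e d : nat) (x : L) : L :=
  \sum_(k < d) x ^+ (p ^ (e * k)).

(* Main.v *)
Require Import Defs.
From mathcomp Require Import all_boot all_order all_algebra all_field.
Local Open Scope ring_scope.
Import GRing.Theory.

Lemma reidx (L : nmodType) (m d : nat) (G : nat -> L) :
  \sum_(k < m * d) G k = \sum_(a < m) \sum_(b < d) G (m * b + a)%N.
Proof.
rewrite exchange_big /=.
elim: d => [|d IH]; first by rewrite muln0 !big_ord0.
rewrite big_ord_recr /= -IH -!(big_mkord xpredT) mulnS addnC.
rewrite (big_cat_nat _ (n := (m * d)%N)) //= ?leq_addr //; congr (_ + _).
rewrite -{1}(add0n (m * d)%N) big_addn addKn big_mkord.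
by apply: eq_bigr => i _; rewrite addnC.
Qed.

Section F.
Variables (L : finFieldType) (p : nat).
Hypotheses (hp : prime p) (hchar : p \in [pchar L]).

Lemma frobD k (x y : L) : (x + y) ^+ (p ^ k) = x ^+ (p ^ k) + y ^+ (p ^ k).
Proof. by rewrite exprDn_pchar // pnatX (pnatE _ hp) hchar. Qed.

Lemma frob_sum k d (F : 'I_d -> L) :
  (\sum_(i < d) F i) ^+ (p ^ k) = \sum_(i < d) F i ^+ (p ^ k).
Proof.
apply: (big_morph (fun x : L => x ^+ (p ^ k))) => [x y|]; first exact: frobD.
by rewrite expr0n expn_eq0 eqn0Ngt prime_gt0.
Qed.

Lemma trans m d (x : L) :
  ftrace p 1 (m * d) x = ftrace p 1 m (ftrace p m d x).
Proof.
rewrite /ftrace (@reidx _ m d (fun k => x ^+ (p ^ (1 * k)))); apply: eq_bigr => a _.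
rewrite frob_sum; apply: eq_bigr => b _.
by rewrite -exprM -expnD !mul1n.
Qed.

Lemma trZ m d (c x : L) : c ^+ (p ^ m) = c ->
  ftrace p m d (c * x) = c * ftrace p m d x.
Proof.
move=> hc; rewrite /ftrace mulr_sumr; apply: eq_bigr => b _.
rewrite exprMn; congr (_ * _).
elim: (nat_of_ord b) => [|k IH]; first by rewrite muln0 expn0 expr1.
by rewrite mulnS expnD exprM hc IH.
Qed.
End F.


Theorem mainTheorem5 (L : finFieldType) (p m n : nat)
  (hp : prime p) (hchar : p \in [pchar L]) (hcard : #|L| = (p ^ n)%N)
  (hmn : (m %| n)%N)
  (hgcd : coprime (p ^ m).-1 ((p ^ n).-1 %/ (p ^ m).-1))
  (alpha : L) (halpha : ((p ^ n).-1).-primitive_root alpha) :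
  let s := (p ^ m).-1 in
  let t := ((p ^ n).-1 %/ (p ^ m).-1)%N in
  let beta := alpha ^+ t in
  let gamma := alpha ^+ s in
  let tr_n_p := ftrace p 1 n in          (* tr_{F_{p^n}/F_p} *)
  let tr_n_m := ftrace p m (n %/ m) in   (* tr_{F_{p^n}/F_{p^m}} *)
  let tr_m_p := ftrace p 1 m in          (* tr_{F_{p^m}/F_p} *)
  let B := fun i j : nat => tr_n_p (beta ^+ i * gamma ^+ j) in
  forall j : nat, (j < t)%N ->
    (tr_n_m (gamma ^+ j) = 0 -> forall i : nat, (i < s)%N -> B i j = 0) /\
    (forall r : nat, tr_n_m (gamma ^+ j) = beta ^+ r ->
       forall i : nat, (i < s)%N -> B i j = tr_m_p (beta ^+ (r + i))).
Proof.
have hm0 : (0 < m)%N.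
  case: m hmn {hgcd} => // hmn.
  move: hmn; rewrite dvd0n => /eqP hn0.
  by have := card_finNzRing_gt1 L; rewrite hcard hn0.
move=> s t beta gamma tr_n_p tr_n_m tr_m_p B j _.
have hp0 : (0 < p)%N := prime_gt0 hp.
have hdv : ((p ^ m).-1 %| (p ^ n).-1)%N.
  case/dvdnP: hmn => d ->; rewrite mulnC expnM.
  exact: dvdn_pred_predX.
have hbeta : beta ^+ (p ^ m) = beta.
  have hst : (t * (p ^ m).-1)%N = (p ^ n).-1 by rewrite /t divnK.
  have h1 : (0 < p ^ m)%N by rewrite expn_gt0 hp0.
  have ha1 : alpha ^+ (p ^ n).-1 = 1 := prim_expr_order halpha.
  rewrite -{1}(prednK h1) exprS /beta -exprM hst ha1.
  by rewrite mulr1.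
have hB : forall i, B i j = tr_m_p (beta ^+ i * tr_n_m (gamma ^+ j)).
  move=> i; rewrite /B /tr_n_p /tr_m_p /tr_n_m -(divnK hmn) mulnC trans //.
  rewrite (mulnC m) mulnK; last first.
    exact: hm0.
  rewrite trZ //.
  by rewrite -exprM mulnC exprM hbeta.
split.
  move=> h0 i _; rewrite hB h0 mulr0 /tr_m_p /ftrace big1 // => k _.
  by rewrite expr0n expn_eq0 eqn0Ngt prime_gt0.
by move=> r hr i _; rewrite hB hr -exprD addnC.
Qed.
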